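(* Let $D$ be a discrete valuation ring with maximal ideal $P=\pi D$ and field of fractions $K$. Let $A$ be a $D$-algebra with standard assumptions, and let $\widehat{A}$ be the $P$-adic completion of $A$. Then $\textnormal{Int}_K(\widehat{A})=\textnormal{Int}_K(A)$.
   Context: A $D$-algebra $A$ satisfies the standard assumptions if it is torsion-free as a $D$-module and $A\cap K = D$ inside $K\otimes_D A$; polynomials in $K[X]$ are evaluated in $K\otimes_D A$, and $\textnormal{Int}_K(A)=\{f\in K[X]\mid f(A)\subseteq A\}$. $\widehat{A}=\varprojlim A/\pi^kA$, into which $A$ embeds canonically; $\textnormal{Int}_K(\widehat{A})=\{f\in K[X]\mid f(\widehat{A})\subseteq \widehat{A}\}$, with evaluation in $K\otimes_D\widehat{A}$. *)

(* Defs.v *)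
From HB Require Import structures.
From mathcomp Require Import all_boot all_order all_algebra.
Set Implicit Arguments. Unset Strict Implicit. Unset Printing Implicit Defensive.
Import Order.TTheory GRing.Theory Num.Theory.
Local Open Scope ring_scope.

Definition is_DVR (D : idomainType) (pi : D) : Prop :=
  pi != 0 /\ pi \isn't a GRing.unit /\
  forall x : D, x != 0 -> exists (u : D) (n : nat), u \is a GRing.unit /\ x = u * pi ^+ n.

Notation K_of D := {fraction D}.
Definition toK (D : idomainType) : D -> K_of D := @FracField.tofrac D.

(* K (x)_D M is realised as the localization S^{-1} M, S = D \ {0}:
   pairs (m, s) with (m, s) ~ (m', s') iff t (s' m - s m') = 0 for some t != 0. *)

Definition torsion_free (D : idomainType) (A : algType D) : Prop :=
  forall (d : D) (a : A), d *: a = 0 -> d = 0 \/ a = 0.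

(* A \cap K = D inside K (x)_D A: if k = d/e in K is such that k (x) 1 lies in A
   (i.e. (d 1_A, e) ~ (a, 1) for some a in A), then k lies in D. *)
Definition cap_K_eq_D (D : idomainType) (A : algType D) : Prop :=
  forall d e : D, e != 0 ->
    (exists (a : A) (t : D), t != 0 /\ t *: (e *: a - d%:A) = 0) ->
    exists c : D, d = e * c.

Definition standard_assumptions (D : idomainType) (A : algType D) : Prop :=
  torsion_free A /\ cap_K_eq_D A.

Definition evalD (D : idomainType) (A : algType D) (g : {poly D}) (x : A) : A :=
  (map_poly (in_alg A) g).[x].

(* Int_K(A): f in K[X] with f(A) \subseteq A, evaluation in K (x)_D A.
   Writing f = g / d with g in D[X], d in D nonzero, f(x) = (g(x), d) in
   S^{-1}A, and f(x) in A means (g(x), d) ~ (y, 1) for some y in A. *)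
Definition IntK (D : idomainType) (A : algType D) (f : {poly K_of D}) : Prop :=
  forall (g : {poly D}) (d : D), d != 0 ->
    map_poly (@toK D) g = toK d *: f ->
    forall x : A, exists (y : A) (t : D), t != 0 /\ t *: (d *: y - evalD g x) = 0.

(* The pi-adic completion \hat A = lim A / pi^k A, realised as compatible
   sequences (x_k) (x_k representing the component in A / pi^k A) with
   x_{k+1} = x_k mod pi^k A, two sequences being equal iff they agree
   modulo pi^k A in every component k. *)
Definition congr_pi (D : idomainType) (A : algType D) (pi : D) (k : nat) (a b : A) : Prop :=
  exists c : A, a - b = pi ^+ k *: c.

Definition compat_seq (D : idomainType) (A : algType D) (pi : D) (x : nat -> A) : Prop :=
  forall k, congr_pi pi k (x k.+1) (x k).

(* Int_K(\hat A), evaluation in K (x)_D \hat A = S^{-1} \hat A. *)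
Definition IntK_hat (D : idomainType) (A : algType D) (pi : D) (f : {poly K_of D}) : Prop :=
  forall (g : {poly D}) (d : D), d != 0 ->
    map_poly (@toK D) g = toK d *: f ->
    forall x : nat -> A, compat_seq pi x ->
      exists (y : nat -> A) (t : D), compat_seq pi y /\ t != 0 /\
        forall k, congr_pi pi k (t *: (d *: y k - evalD g (x k))) 0.

(* Main.v *)
Require Import Defs.
From HB Require Import structures.
From mathcomp Require Import all_boot all_order all_algebra.
From Stdlib Require Import ClassicalEpsilon.
Set Implicit Arguments. Unset Strict Implicit. Unset Printing Implicit Defensive.
Import Order.TTheory GRing.Theory Num.Theory.
Local Open Scope ring_scope.

Section Aux.
Variables (D : idomainType) (A : algType D) (pi : D).

Lemma cg_refl k (a : A) : congr_pi pi k a a.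
Proof. by exists 0; rewrite subrr scaler0. Qed.

Lemma cg_add k (a b a' b' : A) : congr_pi pi k a a' -> congr_pi pi k b b' ->
  congr_pi pi k (a + b) (a' + b').
Proof.
move=> [c Hc] [c' Hc']; exists (c + c').
have -> : a + b - (a' + b') = (a - a') + (b - b').
  by rewrite opprD addrACA.
by rewrite Hc Hc' scalerDr.
Qed.

Lemma cg_mul k (a b a' b' : A) : congr_pi pi k a a' -> congr_pi pi k b b' ->
  congr_pi pi k (a * b) (a' * b').
Proof.
move=> [c Hc] [c' Hc']; exists (c * b + a' * c').
have -> : a * b - a' * b' = (a - a') * b + a' * (b - b').
  by rewrite mulrBl mulrBr addrA subrK.
by rewrite Hc Hc' scalerDr scalerAl scalerAr.
Qed.

Lemma cg_trans k (a b c : A) : congr_pi pi k a b -> congr_pi pi k b c -> congr_pi pi k a c.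
Proof.
move=> [u Hu] [v Hv]; exists (u + v).
by rewrite scalerDr -Hu -Hv addrA subrK.
Qed.

Lemma cg_weak k n (a b : A) : congr_pi pi (k + n) a b -> congr_pi pi k a b.
Proof. by move=> [c Hc]; exists (pi ^+ n *: c); rewrite scalerA -exprD Hc. Qed.

Lemma evalD_ind (p : {poly D}) c (x : A) :
  evalD (p * 'X + c%:P) x = evalD p x * x + c%:A.
Proof.
by rewrite /evalD rmorphD rmorphM /= map_polyX map_polyC hornerD hornerMX hornerC.
Qed.

Lemma cg_eval k (g : {poly D}) (a b : A) : congr_pi pi k a b ->
  congr_pi pi k (evalD g a) (evalD g b).
Proof.
move=> H; elim/poly_ind: g => [|p c IH].
  by rewrite /evalD !rmorph0 !horner0; apply: cg_refl.
rewrite !evalD_ind; apply: cg_add; first exact: cg_mul.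
exact: cg_refl.
Qed.

Lemma tf_cancel (s : D) (a b : A) : torsion_free A -> s != 0 ->
  s *: a = s *: b -> a = b.
Proof.
move=> tf sn0 E; have : s *: (a - b) = 0 by rewrite scalerBr E subrr.
by case/tf => [/eqP|/eqP]; rewrite ?(negbTE sn0) // subr_eq0 => /eqP.
Qed.

End Aux.

Theorem mainTheorem10 (D : idomainType) (pi : D) (A : algType D) :
  is_DVR pi -> standard_assumptions A ->
  forall f : {poly {fraction D}}, IntK_hat A pi f <-> IntK A f.
Proof.
move=> [pi0 [_ dvr]] [tf _] f.
have pin0 : forall n, pi ^+ n != 0 by move=> n; rewrite expf_neq0.
split.
- move=> H g d dn0 Hg x.
  have cx : compat_seq pi (fun _ : nat => x) by move=> k; apply: cg_refl.
  have [y [t [_ [tn0 Hy]]]] := H g d dn0 Hg _ cx.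
  have [u [n [uU Ed]]] := dvr d dn0.
  have [v [m [vU Et]]] := dvr t tn0.
  have [c Hc] := Hy (n + m)%N.
  rewrite subr0 Et (mulrC v) exprD (mulrC (pi ^+ n)) -!scalerA in Hc.
  have Hc' := tf_cancel tf (pin0 m) Hc.
  have Eg : evalD g x = d *: y (n + m)%N - v^-1 *: (pi ^+ n *: c).
    rewrite -Hc' scalerA mulVr // scale1r opprB addrC subrK //.
  exists (y (n + m)%N - (u * v)^-1 *: c), 1; split; first exact: oner_neq0.
  rewrite scale1r Eg scalerBr.
  rewrite opprB addrC addrA subrK Ed !scalerA.
  have -> : u * pi ^+ n / (u * v) = v^-1 * pi ^+ n.
    by rewrite invrM // mulrC -mulrA mulKr.
  by rewrite subrr.
- move=> H g d dn0 Hg x cx.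
  have Hy : forall k, exists y : A, d *: y = evalD g (x k).
    move=> k; have [y [t [tn0 Ht]]] := H g d dn0 Hg (x k).
    exists y; apply/eqP; rewrite -subr_eq0; apply/eqP.
    by case: (tf _ _ Ht) => // /eqP; rewrite (negbTE tn0).
  pose y k := proj1_sig (constructive_indefinite_description _ (Hy k)).
  have yP : forall k, d *: y k = evalD g (x k)
    by move=> k; rewrite /y; case: constructive_indefinite_description.
  have [u [n [uU Ed]]] := dvr d dn0.
  have cxn : forall k j, congr_pi pi k (x (k + j)%N) (x k).
    move=> k; elim=> [|j IH]; first by rewrite addn0; apply: cg_refl.
    apply: cg_trans IH; rewrite addnS; apply: (@cg_weak _ _ _ _ j); exact: cx.
  exists (fun k => y (k + n)%N), 1; split; [|split; first exact: oner_neq0].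
  + move=> k; have [c Hc] := cg_eval g (cx (k + n)%N).
    rewrite -!yP -scalerBr Ed exprD (mulrC u) (mulrC (pi ^+ k)) -!scalerA in Hc.
    rewrite addSn.
    have Hc' := tf_cancel tf (pin0 n) Hc.
    exists (u^-1 *: c); rewrite scalerA mulrC -scalerA -Hc' scalerA mulVr //.
    by rewrite scale1r.
  + move=> k; rewrite scale1r yP; have [c Hc] := cg_eval g (cxn k n).
    by exists c; rewrite subr0.
Qed.
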